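(* Let $v\in C^1([0,T];C^1(\mathcal K^* ))$ and $B\in C([0,T];C^0(\mathcal K^* ))$ solve the discrete incompressible Euler equations $\frac{dv}{dt}+I_v(\tilde D_1v)+\tilde D_0B=0$, $D_2M_1v=0$. Then the discrete kinetic energy $E^{\rm kin}(t)=\frac12\langle v,v\rangle_1=\frac12\sum_j\frac{A_j}{\ell_j^*}v_j^2$ is constant in time: $\frac{dE^{\rm kin}}{dt}=0$.
   Context: $C^k(\mathcal K^* )$ denotes real dual $k$-cochains on a Delaunay–Voronoi cell complex; velocity $v$ has one value per dual edge $e_j^*$ of length $\ell_j^*$, dual to primal face $f_j$ of area $A_j$. $M_1$ is the positive diagonal matrix with $(M_1)_{jj}=A_j/\ell_j^*$, $\langle v,w\rangle_1=v^TM_1w$. $\tilde D_0,\tilde D_1$ are dual coboundary matrices, $D_2$ the primal coboundary from faces to cells, satisfying summation by parts $\langle\tilde D_0B,v\rangle_1=B^TD_2M_1v$. The contraction $I_v:C^2(\mathcal K^* )\to C^1(\mathcal K^* )$ is defined by $M_1I_v(\omega)=\frac12(\tilde U(v)\omega-\tilde D_1^T\tilde U(v)^Tv)$, where $\tilde U(v)$ is a matrix (of the shape of $\tilde D_1^T$) depending linearly on $v$. *)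

(* Defs.v *)
From HB Require Import structures.
From mathcomp Require Import all_boot all_order all_algebra.
From mathcomp Require Import all_classical all_reals all_analysis.
Set Implicit Arguments. Unset Strict Implicit. Unset Printing Implicit Defensive.
Import Order.TTheory GRing.Theory Num.Theory.
Import numFieldNormedType.Exports.
Local Open Scope ring_scope.

(* Cochain spaces as column vectors:
   n0 = #dual 0-cells (= primal cells), n1 = #dual edges (= primal faces),
   n2 = #dual 2-cells (= primal edges). *)

Definition hodge1 (R : realType) (n1 : nat) (A ell : 'I_n1 -> R) : 'M[R]_n1 :=
  diag_mx (\row_j (A j / ell j)).

Definition ip1 (R : realType) (n1 : nat) (M1 : 'M[R]_n1) (v w : 'cV[R]_n1) : R :=
  (v^T *m M1 *m w) 0 0.

Definition contr_Iv (R : realType) (n1 n2 : nat) (M1 : 'M[R]_n1)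
  (Dt1 : 'M[R]_(n2, n1)) (U : 'cV[R]_n1 -> 'M[R]_(n1, n2))
  (v : 'cV[R]_n1) (om : 'cV[R]_n2) : 'cV[R]_n1 :=
  invmx M1 *m ((2%:R)^-1 *: (U v *m om - Dt1^T *m (U v)^T *m v)).

Definition Ekin (R : realType) (n1 : nat) (M1 : 'M[R]_n1) (v : 'cV[R]_n1) : R :=
  (2%:R)^-1 * ip1 M1 v v.

(* Main.v *)
Require Import Defs.
From HB Require Import structures.
From mathcomp Require Import all_boot all_order all_algebra.
From mathcomp Require Import all_classical all_reals all_analysis.
From mathcomp Require Import ring.
Import Order.TTheory GRing.Theory Num.Theory.
Import numFieldNormedType.Exports.
Local Open Scope classical_set_scope.
Local Open Scope ring_scope.

Lemma ip1_sum (R : realType) n (A ell : 'I_n -> R) (x y : 'cV[R]_n) :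
  ip1 (hodge1 A ell) x y = \sum_i x i 0 * (A i / ell i) * y i 0.
Proof.
rewrite /ip1 /hodge1 !mxE; apply: eq_bigr => i _.
rewrite !mxE (bigD1 i) //= big1 ?addr0; last first.
  by move=> j /negPf ji; rewrite !mxE ji mulr0n mulr0.
by rewrite [x^T _ _]mxE [diag_mx _ _ _]mxE eqxx mulr1n mxE.
Qed.

Lemma ip1_Mv (R : realType) n (A ell : 'I_n -> R) (hA : forall j, 0 < A j) (hell : forall j, 0 < ell j)
  (X y : 'cV[R]_n) :
  ip1 (hodge1 A ell) (invmx (hodge1 A ell) *m X) y = (X^T *m y) 0 0.
Proof.
have hu : hodge1 A ell \in unitmx.
  rewrite unitmxE /hodge1 det_diag unitfE; apply/prodf_neq0 => i _.
  by rewrite mxE mulf_neq0 // ?invr_eq0 gt_eqF.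
have H : (invmx (hodge1 A ell))^T *m hodge1 A ell = 1%:M.
  by rewrite trmx_inv /hodge1 tr_diag_mx -/(hodge1 A ell) mulVmx.
by rewrite /ip1 trmx_mul -(mulmxA X^T) H mulmx1.
Qed.

Theorem theorem3p3 (R : realType) (n0 n1 n2 : nat)
  (A ell : 'I_n1 -> R) (hA : forall j, 0 < A j) (hell : forall j, 0 < ell j)
  (Dt0 : 'M[R]_(n1, n0)) (Dt1 : 'M[R]_(n2, n1)) (D2 : 'M[R]_(n0, n1))
  (hsbp : forall (b : 'cV[R]_n0) (w : 'cV[R]_n1),
      ip1 (hodge1 A ell) (Dt0 *m b) w = (b^T *m D2 *m hodge1 A ell *m w) 0 0)
  (U : {linear 'cV[R]_n1 -> 'M[R]_(n1, n2)})
  (T : R) (hT : 0 < T)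
  (v : R -> 'cV[R]_n1) (B : R -> 'cV[R]_n0)
  (hvc : {within `[0, T], continuous v})
  (hvd : forall t, t \in `]0, T[ -> derivable v t 1)
  (hdvc : {within `[0, T], continuous (derive1 v)})
  (hBc : {within `[0, T], continuous B})
  (heuler : forall t, t \in `]0, T[ ->
      derive1 v t + contr_Iv (hodge1 A ell) Dt1 U (v t) (Dt1 *m v t)
        + Dt0 *m B t = 0)
  (hdiv : forall t, t \in `[0, T] -> D2 *m hodge1 A ell *m v t = 0) :
  forall t, t \in `]0, T[ ->
    derivable (fun s => Ekin (hodge1 A ell) (v s)) t 1 /\
    derive1 (fun s => Ekin (hodge1 A ell) (v s)) t = 0.
Proof.
move=> t tI.
set M := hodge1 A ell.
set c := fun i : 'I_n1 => A i / ell i.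
have Df : forall i, is_derive t 1 (fun s => v s i 0) (derive1 v t i 0).
  move=> i; apply: DeriveDef.
    exact: ((derivable_mxP _ _ _).1 (hvd t tI) i 0).
  rewrite derive1E derive_mx; first by rewrite mxE.
  exact: hvd tI.
have Dg : forall i, is_derive t 1
    (fun s => (2%:R)^-1 * (v s i 0 * c i * v s i 0))
    ((2%:R)^-1 * c i *: (v t i 0 *: derive1 v t i 0 + v t i 0 *: derive1 v t i 0)).
  move=> i.
  have -> : (fun s => (2%:R)^-1 * (v s i 0 * c i * v s i 0)) =
     ((2%:R)^-1 * c i) \*: ((fun s => v s i 0) * (fun s => v s i 0)).
    apply: funext => s /=; rewrite /GRing.scale /=.
    change (2%:R^-1 * (v s i 0 * c i * v s i 0) = 2%:R^-1 * c i * (v s i 0 * v s i 0)).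
    ring.
  apply: is_deriveZ; apply: is_deriveM; exact: Df.
have hE : (fun s => Ekin M (v s)) =
    \sum_(i < n1) (fun s => (2%:R)^-1 * (v s i 0 * c i * v s i 0)).
  rewrite fct_sumE; apply/funext => s.
  by rewrite /Ekin /M ip1_sum mulr_sumr.
have DE := @is_derive_sum _ _ _ n1 _ t 1 _ (fun i => Dg i).
rewrite -hE in DE.
split; first exact: (@ex_derive _ _ _ _ _ _ _ DE).
rewrite derive1E (@derive_val _ _ _ _ _ _ _ DE).
have key : ip1 M (derive1 v t) (v t) = 0.
  have hd : derive1 v t = - (contr_Iv M Dt1 U (v t) (Dt1 *m v t) + Dt0 *m B t).
    by apply/eqP; rewrite -addr_eq0 addrA; apply/eqP; exact: heuler.
  rewrite hd /ip1 linearN /= linearD /= !mulNmx !mulmxDl mxE mxE.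
  rewrite -/(ip1 M (contr_Iv M Dt1 U (v t) (Dt1 *m v t)) (v t)).
  rewrite -/(ip1 M (Dt0 *m B t) (v t)) hsbp -(mulmxA (B t)^T) -(mulmxA (B t)^T).
  rewrite hdiv; last first.
    by move: tI; rewrite !in_itv /= => /andP[/ltW -> /ltW ->].
  rewrite mulmx0 mxE addr0 /contr_Iv ip1_Mv //.
  set P := U (v t) *m (Dt1 *m v t).
  set Q := Dt1^T *m (U (v t))^T *m v t.
  have PQ : Q^T *m v t = (P^T *m v t)^T.
    by rewrite /P /Q !trmx_mul !trmxK !mulmxA.
  rewrite linearZ /= -scalemxAl mxE.
  rewrite (raddfB (@trmx _ _ _)) /=.
  rewrite mulmxDl mulNmx mxE [in X in _ + X]mxE PQ [(P^T *m v t)^T 0 0]mxE.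
  by rewrite mxE subrr mulr0 oppr0.
rewrite ip1_sum in key.
rewrite -[X in _ = X]key; apply: eq_bigr => i _; rewrite /GRing.scale /=.
rewrite /c; move: (v t i 0) (derive1 v t i 0) (A i) (ell i) (hell i) => a d x y hy.
by field; rewrite gt_eqF.
Qed.
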